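(* Fix an integer $d\geq 2$ and $k\in\{2,\ldots,d\}$, and let $X\subseteq S^{d-1}\subseteq\mathbb{R}^d$ be a set of unit vectors with $|X|=d+k$ such that $\max\{\langle x,y\rangle:x,y\in X,\ x\neq y\}=0$. Then there exist a possibly empty subset $X_0\subseteq X$ and a partition $X_1\sqcup\cdots\sqcup X_l=X\setminus X_0$ with $l\geq k$ such that (i) $|X_0|=\dim\operatorname{span}X_0$, (ii) $|X_i|=\dim\operatorname{span}X_i+1$ for each $i\in\{1,\ldots,l\}$, and (iii) $\operatorname{span}X_i\perp\operatorname{span}X_j$ whenever $i\neq j$ (with $i,j\in\{0,1,\ldots,l\}$).
   Context: For any $X\subseteq S^{d-1}$ with $|X|\geq d+2$ one always has $\max\{\langle x,y\rangle:x\neq y\}\geq 0$ (Rankin's orthoplex bound); the hypothesis says $X$ achieves equality in this bound. *)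

(* Defs.v *)
From HB Require Import structures.
From mathcomp Require Import all_boot all_order all_algebra.
From mathcomp Require Import finmap.
From mathcomp Require Import reals.
Set Implicit Arguments. Unset Strict Implicit. Unset Printing Implicit Defensive.
Import Order.TTheory GRing.Theory Num.Theory.
Local Open Scope ring_scope.

Definition dotp (R : realType) (d : nat) (u v : 'rV[R]_d) : R :=
  \sum_(i < d) u ord0 i * v ord0 i.

Definition fspan (R : realType) (d : nat) (S : {fset 'rV[R]_d}) : {vspace 'rV[R]_d} :=
  <<(enum_fset S)>>%VS.

Definition span_orth (R : realType) (d : nat) (S T : {fset 'rV[R]_d}) : Prop :=
  forall u v, u \in fspan S -> v \in fspan T -> dotp u v = 0.

(* Main.v *)
Require Import Defs.
From HB Require Import structures.
From mathcomp Require Import all_boot all_order all_algebra.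
From mathcomp Require Import finmap.
From mathcomp Require Import reals.
From Stdlib Require Import Classical.
From mathcomp Require Import zify.
Import Order.TTheory GRing.Theory Num.Theory.
Local Open Scope ring_scope.
Local Open Scope fset_scope.

Section Aux.
Local Open Scope ring_scope.
Variables (R : realType) (d : nat).
Local Notation V := 'rV[R]_d.
Implicit Types (u v x y : V) (S T X I J : {fset V}).

Lemma dotpC u v : dotp u v = dotp v u.
Proof. by apply: eq_bigr => i _; rewrite mulrC. Qed.

Lemma dotpDl u v y : dotp (u + v) y = dotp u y + dotp v y.
Proof. by rewrite /dotp -big_split; apply: eq_bigr => i _; rewrite mxE mulrDl. Qed.

Lemma dotpZl (a : R) u y : dotp (a *: u) y = a * dotp u y.
Proof. by rewrite /dotp mulr_sumr; apply: eq_bigr => i _; rewrite mxE mulrA. Qed.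

Lemma dotp0l y : dotp 0 y = 0.
Proof. by rewrite /dotp big1 // => i _; rewrite mxE mul0r. Qed.

Lemma dotp_suml (I : Type) (s : seq I) (P : pred I) (F : I -> V) y :
  dotp (\sum_(i <- s | P i) F i) y = \sum_(i <- s | P i) dotp (F i) y.
Proof.
by apply: (big_morph (fun u => dotp u y)) => [u v|]; rewrite ?dotpDl ?dotp0l.
Qed.

Lemma dotp_ge0 u : 0 <= dotp u u.
Proof. by apply: sumr_ge0 => i _; rewrite -expr2 sqr_ge0. Qed.

Lemma dotp_eq0 u : dotp u u = 0 -> u = 0.
Proof.
move=> /psumr_eq0P H; apply/rowP => i; rewrite mxE.
have /eqP := H (fun j _ => (sqr_ge0 (u ord0 j))) i isT.
by rewrite mulf_eq0 orbb => /eqP.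
Qed.

Lemma span_orthP S T :
  (forall x y, x \in S -> y \in T -> dotp x y = 0) -> span_orth S T.
Proof.
move=> H u v Hu Hv.
have -> := coord_span (X := in_tuple (enum_fset S)) Hu.
rewrite dotp_suml big1 // => i _; rewrite dotpZl.
have Hi : (in_tuple (enum_fset S))`_i \in S.
  by apply: mem_nth; exact: ltn_ord.
rewrite dotpC (coord_span (X := in_tuple (enum_fset T)) Hv) dotp_suml big1 ?mulr0 // => j _.
rewrite dotpZl dotpC H ?mulr0 //.
by apply: mem_nth; exact: ltn_ord.
Qed.

Definition indep S := forall a : V -> R,
  \sum_(x <- S) a x *: x = 0 -> forall x, x \in S -> a x = 0.

Lemma indepE S : indep S <-> #|` S| = \dim (fspan S).
Proof.
set s := enum_fset S.
have Hu : uniq s := fset_uniq S.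
have -> : (#|` S| = \dim (fspan S)) <-> free (in_tuple s).
  rewrite /free /fspan /=; split => [H|/eqP H]; first by rewrite -H.
  by rewrite -H.
split => [Hi | /freeP Hf].
  apply/freeP => k Hk i.
  pose a x := \sum_(j < size s | s`_j == x) k j.
  have Ha (j : 'I_(size s)) : a s`_j = k j.
    rewrite /a (big_pred1 j) // => j'; rewrite /= nth_uniq //.
  have := Hi a; rewrite -Ha; apply; last by apply: mem_nth.
  rewrite (big_nth 0) big_mkord -[RHS]Hk; apply: eq_bigr => j _; by rewrite Ha.
move=> a Ha x Hx.
have E : \sum_(j < size s) a s`_j *: (in_tuple s)`_j = 0.
  by rewrite -[RHS]Ha (big_nth 0) big_mkord.
have Hix : (index x s < size s)%N by rewrite index_mem.
have := Hf (fun j => a s`_j) E (Ordinal Hix).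
by rewrite /= nth_index.
Qed.


Lemma sum_fsep (M : zmodType) X (p : pred V) (F : V -> M) :
  \sum_(x <- [fset x in X | p x]) F x = \sum_(x <- X | p x) F x.
Proof.
rewrite -[RHS]big_filter; apply: perm_big; apply: uniq_perm.
- exact: fset_uniq.
- exact/filter_uniq/fset_uniq.
by move=> z; rewrite mem_filter !inE andbC.
Qed.

Lemma sum_fsub (M : zmodType) S T (F : V -> M) : S `<=` T ->
  (forall x, x \in T -> x \notin S -> F x = 0) ->
  \sum_(x <- S) F x = \sum_(x <- T) F x.
Proof.
move=> /fsubsetP HST H0.
rewrite [RHS](bigID (fun x => x \in S)) /= [X in _ = _ + X]big1_seq ?addr0; last first.
  by move=> x /andP[/= Hn Hx]; apply: H0.
rewrite -[RHS]big_filter; apply: perm_big; apply: uniq_perm.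
- exact: fset_uniq.
- exact/filter_uniq/fset_uniq.
move=> z; rewrite mem_filter /=; apply/idP/andP => [Hz|[]//]; split => //.
exact: HST.
Qed.

Definition nonpos X := forall x y, x \in X -> y \in X -> x != y -> dotp x y <= 0.

Definition posdep (I : {fset V}) := exists a : V -> R,
  (forall x, x \in I -> 0 < a x) /\ \sum_(x <- I) a x *: x = 0.

Lemma posdep_orth X I : nonpos X -> I `<=` X -> posdep I ->
  forall x y, x \in I -> y \in X `\` I -> dotp x y = 0.
Proof.
move=> Hn /fsubsetP HIX [a [Ha Hs]] x y Hx /fsetDP [HyX HyI].
have E : \sum_(z <- I | z \in I) - (a z * dotp z y) == 0.
  rewrite -big_seq sumrN oppr_eq0.
  have E0 := congr1 (fun u => dotp u y) Hs; rewrite /= dotp0l dotp_suml in E0.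
  by apply/eqP; rewrite -[RHS]E0; apply: eq_bigr => z _; rewrite dotpZl.
move: E; rewrite psumr_eq0; last first.
  move=> z Hz; rewrite oppr_ge0; apply: mulr_ge0_le0; first exact: ltW (Ha _ Hz).
  apply: Hn; [exact: HIX| exact: HyX|].
  by apply: contraNneq HyI => <-.
move=> /allP /(_ x Hx); rewrite Hx /= oppr_eq0 mulf_eq0 => /orP[|/eqP //].
by rewrite gt_eqF ?Ha.
Qed.

Lemma exists_posdep X : nonpos X -> ~ indep X ->
  exists I, [/\ I `<=` X, I != fset0 & posdep I].
Proof.
move=> Hn Hi.
have [a [Ha [x1 [Hx1 Ha1]]]] : exists a : V -> R,
    \sum_(x <- X) a x *: x = 0 /\ exists x, x \in X /\ a x != 0.
  apply: NNPP => Hne; apply: Hi => a Ha x Hx.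
  case: (eqVneq (a x) 0) => // Hax; exfalso; apply: Hne.
  by exists a; split => //; exists x.
suff Claim : forall b : V -> R, \sum_(x <- X) b x *: x = 0 ->
    forall x, x \in X -> 0 < b x ->
    exists I, [/\ I `<=` X, I != fset0 & posdep I].
  case: (ltrgtP (a x1) 0) => [Hlt|Hgt|Heq]; last by rewrite Heq eqxx in Ha1.
  - apply: (Claim (fun x => - a x) _ x1 Hx1); last by rewrite oppr_gt0.
    under eq_bigr do rewrite scaleNr.
    by rewrite sumrN Ha oppr0.
  - exact: (Claim a Ha x1 Hx1).
move=> b Hb x Hx Hbx.
pose up := \sum_(z <- X | 0 < b z) b z *: z.
pose un := \sum_(z <- X | ~~ (0 < b z)) b z *: z.
have Hsplit : up + un = 0 by move: Hb; rewrite (bigID (fun z => 0 < b z)) /=.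
have Hupun : up = - un by apply/eqP; rewrite -addr_eq0 Hsplit.
have Hdup y : y \in X -> ~~ (0 < b y) -> dotp up y <= 0.
  move=> Hy Hby; rewrite dotp_suml big_seq_cond; apply: sumr_le0 => z /andP[Hz Hbz].
  rewrite dotpZl; apply: mulr_ge0_le0; first exact: ltW.
  apply: Hn => //.
  by apply: contraNneq Hby => <-.
have Hup0 : up = 0.
  apply: dotp_eq0; apply/eqP; rewrite eq_le dotp_ge0 andbT.
  rewrite {2}Hupun dotpC /un -sumrN dotp_suml big_seq_cond.
  apply: sumr_le0 => z /andP[Hz Hbz].
  rewrite -scaleNr dotpZl dotpC; apply: mulr_ge0_le0; last exact: Hdup.
  by rewrite oppr_ge0 leNgt.
exists [fset z in X | 0 < b z]; split.
- by apply/fsubsetP => z; rewrite !inE => /andP[].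
- by apply/fset0Pn; exists x; rewrite !inE Hx Hbx.
exists b; split; first by move=> z; rewrite !inE => /andP[].
by rewrite sum_fsep.
Qed.

Lemma exists_argmin (s : seq V) (P : pred V) (f : V -> R) :
  (exists2 x, x \in s & P x) ->
  exists x, [/\ x \in s, P x & forall y, y \in s -> P y -> f x <= f y].
Proof.
elim: s => [[x]//|z s IH [x Hx Px]].
case: (boolP (has P s)) => [/hasP Hs|Hs].
  have [w [Hw Pw Hmin]] := IH Hs.
  case: (boolP (P z)) => Pz.
    case: (lerP (f z) (f w)) => Hzw.
      exists z; split => //; first by rewrite inE eqxx.
      move=> y; rewrite inE => /orP[/eqP->//|Hy Py].
      exact: le_trans Hzw (Hmin y Hy Py).
    exists w; split => //; first by rewrite inE Hw orbT.
    move=> y; rewrite inE => /orP[/eqP-> _|Hy Py]; first exact: ltW.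
    exact: Hmin.
  exists w; split => //; first by rewrite inE Hw orbT.
  move=> y; rewrite inE => /orP[/eqP->|Hy Py]; first by rewrite (negbTE Pz).
  exact: Hmin.
have Pz : P z.
  move: Hx; rewrite inE => /orP[/eqP<-//|Hx].
  by move/hasPn: Hs => /(_ x Hx); rewrite Px.
exists z; split => //; first by rewrite inE eqxx.
move=> y; rewrite inE => /orP[/eqP->//|Hy Py].
by move/hasPn: Hs => /(_ y Hy); rewrite Py.
Qed.

Lemma not_indep S : ~ indep S ->
  exists b : V -> R, \sum_(x <- S) b x *: x = 0 /\ exists x, x \in S /\ b x != 0.
Proof.
move=> Hi; apply: NNPP => Hne; apply: Hi => a Ha x Hx.
case: (eqVneq (a x) 0) => // Hax; exfalso; apply: Hne.
by exists a; split => //; exists x.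
Qed.

Lemma minimal_posdep n I : (#|` I| <= n)%N -> I != fset0 -> posdep I ->
  exists J, [/\ J `<=` I, J != fset0, posdep J &
                forall x0, x0 \in J -> indep (J `\ x0)].
Proof.
elim: n I => [|n IH] I HIn HI0 [a [Ha Hs]].
  by move: HIn; rewrite leqn0 cardfs_eq0 (negbTE HI0).
case: (classic (forall x0, x0 \in I -> indep (I `\ x0))) => Hall.
  by exists I; split => //; exists a.
have [x0 [Hx0 Hnot]] : exists x0, x0 \in I /\ ~ indep (I `\ x0).
  apply: NNPP => H; apply: Hall => x0 Hx0; apply: NNPP => Hn; apply: H.
  by exists x0.
have [b [Hb [x1 [/fsetD1P [Hx10 Hx1] Hb1]]]] := not_indep _ Hnot.
pose c x := b x1 * (if x == x0 then 0 else b x).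
have Hc0 : c x0 = 0 by rewrite /c eqxx mulr0.
have Hc1 : 0 < c x1.
  rewrite /c (negbTE Hx10) lt0r mulf_neq0 //=.
  by rewrite -expr2 sqr_ge0.
have Hcs : \sum_(x <- I) c x *: x = 0.
  have Hz : forall x, x \in I -> x \notin I `\ x0 -> c x *: x = 0.
    move=> x Hx /fsetD1P Hn.
    have -> : x = x0 by case: (eqVneq x x0) => // h; exfalso; apply: Hn.
    by rewrite Hc0 scale0r.
  rewrite -(@sum_fsub _ (I `\ x0) I (fun x => c x *: x) (fsubD1set _ _) Hz).
  rewrite (eq_big_seq (fun x => b x1 *: (b x *: x))); last first.
    move=> x /fsetD1P [Hxx0 _]; by rewrite /c (negbTE Hxx0) scalerA.
  by rewrite -scaler_sumr Hb scaler0.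
have [xs [Hxs Pxs Hmin]] := @exists_argmin (enum_fset I) (fun x => 0 < c x)
  (fun x => a x / c x) (ex_intro2 _ _ x1 Hx1 Hc1).
pose t := a xs / c xs.
have Ht : 0 < t by rewrite divr_gt0 // Ha.
pose e x := a x - t * c x.
have He_ge0 x : x \in I -> 0 <= e x.
  move=> Hx; rewrite /e subr_ge0.
  case: (ltrP 0 (c x)) => Hcx.
    by rewrite -ler_pdivlMr // Hmin.
  by apply: (le_trans _ (ltW (Ha x Hx))); rewrite pmulr_rle0.
have Hex0 : 0 < e x0 by rewrite /e Hc0 mulr0 subr0 Ha.
have Hcxs : c xs != 0 by rewrite gt_eqF.
have Hexs : e xs = 0 by rewrite /e /t divfK // subrr.
have Hes : \sum_(x <- I) e x *: x = 0.
  under eq_bigr do rewrite /e scalerBl -scalerA.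
  by rewrite sumrB -scaler_sumr Hs Hcs scaler0 subr0.
pose J := [fset x in I | 0 < e x].
have HJI : J `<=` I by apply/fsubsetP => x; rewrite !inE => /andP[].
have HJ0 : J != fset0 by apply/fset0Pn; exists x0; rewrite !inE Hx0 Hex0.
have HJn : (#|` J| <= n)%N.
  have HJs : J `<=` I `\ xs.
    apply/fsubsetP => x; rewrite !inE => /andP[Hx Hex]; rewrite Hx andbT.
    by apply: contraTneq Hex => ->; rewrite Hexs ltxx.
  have := fsubset_leq_card HJs; have := cardfsD1 xs I; rewrite Hxs.
  move: HIn; rewrite /= add1n => HIn HIc HJc.
  by rewrite -ltnS (leq_ltn_trans HJc) // -HIc.
have HJp : posdep J.
  exists e; split; first by move=> x; rewrite !inE => /andP[].
  rewrite (@sum_fsub _ J I) //.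
  move=> x Hx; rewrite !inE Hx /= -leNgt => Hle.
  suff -> : e x = 0 by rewrite scale0r.
  by apply/eqP; rewrite eq_le Hle He_ge0.
have [J' [HJ'J HJ'0 HJ'p HJ'i]] := IH J HJn HJ0 HJp.
exists J'; split => //; exact: fsubset_trans HJ'J HJI.
Qed.

Lemma card_posdep_min J : J != fset0 -> posdep J ->
  (forall x0, x0 \in J -> indep (J `\ x0)) ->
  #|` J| = (\dim (fspan J)).+1.
Proof.
move=> /fset0Pn [x0 Hx0] [a [Ha Hs]] Hmin.
have Hle : (\dim (fspan J) <= #|` J|)%N by apply: dim_span.
have Hne : #|` J| != \dim (fspan J).
  apply/eqP => /indepE Hi.
  by have := Hi a Hs x0 Hx0; apply/eqP; rewrite gt_eqF ?Ha.
have Hge : (#|` J `\ x0| <= \dim (fspan J))%N.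
  rewrite (indepE (J `\ x0)).1; last exact: Hmin.
  apply: dimvS; apply: sub_span => z; rewrite /= => /fsetD1P [].
  by [].
have := cardfsD1 x0 J; rewrite Hx0 /= => Hc.
move: Hle Hne Hge Hc; set p := #|` J|; set q := \dim _; set r := #|` _ |.
move=> Hle /eqP Hne Hge Hc.
apply/eqP; rewrite eqn_leq {1}Hc add1n ltnS Hge /=.
rewrite ltn_neqAle Hle andbT; apply/eqP => h; exact: Hne (esym h).
Qed.

Definition decomp_prop X X0 (s : seq {fset V}) :=
  [/\ X0 `<=` X,
      (forall i j, (i < size s)%N -> (j < size s)%N -> i != j ->
         [disjoint nth fset0 s i & nth fset0 s j]%fset),
      (forall x, x \in X `\` X0 <-> exists2 i, (i < size s)%N & x \in nth fset0 s i),
      #|` X0| = \dim (fspan X0) &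
   [/\ (forall i, (i < size s)%N -> #|` nth fset0 s i| = (\dim (fspan (nth fset0 s i))).+1),
       (forall i, (i < size s)%N -> span_orth X0 (nth fset0 s i)),
       (forall i j, (i < size s)%N -> (j < size s)%N -> i != j ->
          span_orth (nth fset0 s i) (nth fset0 s j)) &
       #|` X| = (\dim (fspan X) + size s)%N]].

Lemma decomp_base X : indep X -> decomp_prop X X [::].
Proof.
move=> Hi; split => //.
- by move=> x; split => [|[]//]; rewrite in_fsetD andNb.
- exact/(indepE X).1.
split => //; by rewrite addn0; apply/(indepE X).1.
Qed.

Lemma decomp n X : (#|` X| <= n)%N -> nonpos X -> exists X0 s, decomp_prop X X0 s.
Proof.
elim: n X => [|n IH] X Hn Hneg.
  exists X, [::]; apply: decomp_base => a _ x.
  by move: Hn; rewrite leqn0 cardfs_eq0 => /eqP ->; rewrite inE.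
case: (classic (indep X)) => Hni; first by exists X, [::]; apply: decomp_base.
have [I [HIX HI0 HIp]] := exists_posdep _ Hneg Hni.
have [J [HJI HJ0 HJp HJmin]] := @minimal_posdep _ I (leqnn _) HI0 HIp.
have HJX := fsubset_trans HJI HIX.
pose Y := X `\` J.
have HJpos : (0 < #|` J|)%N by rewrite lt0n cardfs_eq0.
have HYc : #|` Y| = (#|` X| - #|` J|)%N by rewrite cardfsDS.
have HJle : (#|` J| <= #|` X|)%N by apply: fsubset_leq_card.
have HYn : (#|` Y| <= n)%N by rewrite HYc; lia.
have HYneg : nonpos Y.
  move=> x y /fsetDP [Hx _] /fsetDP [Hy _]; exact: Hneg.
have orthJ := posdep_orth _ _ Hneg HJX HJp.
have [X0 [s [HX0 Hdis Hcov Hd0 [Hcard Horth0 Horth Hsz]]]] := IH Y HYn HYneg.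
have HsY i : (i < size s)%N -> nth fset0 s i `<=` Y.
  move=> Hi; apply/fsubsetP => x Hx.
  by have /fsetDP [] := (Hcov x).2 (ex_intro2 _ _ i Hi Hx).
have HX0Y : {subset X0 <= Y} by apply/fsubsetP.
exists X0, (J :: s); split.
- exact: fsubset_trans HX0 (fsubsetDl X J).
- move=> [|i] [|j] //= Hi Hj Hij.
  + apply/fdisjointP => x HxJ; apply/negP => /(fsubsetP (HsY j Hj)) /fsetDP [_].
    by rewrite HxJ.
  + apply/fdisjointP => x Hx; apply/negP => HxJ.
    by move: (fsubsetP (HsY i Hi) x Hx) => /fsetDP [_]; rewrite HxJ.
  + exact: Hdis.
- move=> x; split.
  + move/fsetDP => [HxX HxX0]; case: (boolP (x \in J)) => HxJ.
      by exists 0%N.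
    have : x \in Y `\` X0 by rewrite !in_fsetD HxX0 HxJ HxX.
    by move/(Hcov x).1 => [i Hi Hxi]; exists i.+1.
  + move=> [[|i] Hi /= Hx].
      apply/fsetDP; split; first exact: (fsubsetP HJX).
      by apply/negP => /HX0Y /fsetDP [_]; rewrite Hx.
    have /fsetDP [/fsetDP [HxX _] HxX0] := (Hcov x).2 (ex_intro2 _ _ i Hi Hx).
    by apply/fsetDP.
- exact: Hd0.
split.
- move=> [|i] Hi /=; last exact: Hcard.
  exact: card_posdep_min.
- move=> [|i] Hi /=; last exact: Horth0.
  apply: span_orthP => x y Hx Hy; rewrite dotpC; apply: orthJ => //.
  exact: HX0Y.
- move=> [|i] [|j] //= Hi Hj Hij.
  + apply: span_orthP => x y Hx Hy; apply: orthJ => //.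
    exact: (fsubsetP (HsY j Hj)).
  + apply: span_orthP => x y Hx Hy; rewrite dotpC; apply: orthJ => //.
    exact: (fsubsetP (HsY i Hi)).
  + exact: Horth.
have Hspan : fspan X = (fspan J + fspan Y)%VS.
  rewrite /fspan -span_cat; apply: eq_span => z; rewrite mem_cat.
  case: (boolP (z \in J)) => Hz /=.
    by rewrite (fsubsetP HJX _ Hz).
  by rewrite in_fsetD Hz.
have Hcap : (fspan J :&: fspan Y = 0)%VS.
  apply/eqP; rewrite -subv0; apply/subvP => v /memv_capP [h1 h2].
  rewrite memv0; apply/eqP/dotp_eq0.
  exact: (span_orthP _ _ orthJ) h1 h2.
have HXc : #|` X| = (#|` J| + #|` Y|)%N by rewrite HYc subnKC.
rewrite HXc Hspan (dimv_disjoint_sum Hcap) (card_posdep_min _ HJ0 HJp HJmin) Hsz /=.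
by rewrite addSn addnS addnA.
Qed.
End Aux.

Local Open Scope fset_scope.

Theorem theorem2p2 (R : realType) (d k : nat) (X : {fset 'rV[R]_d}) :
  (2 <= d)%N -> (2 <= k)%N -> (k <= d)%N ->
  (forall x, x \in X -> dotp x x = 1) ->
  #|` X| = (d + k)%N ->
  (forall x y, x \in X -> y \in X -> x != y -> dotp x y <= 0) ->
  (exists x y, [/\ x \in X, y \in X, x != y & dotp x y = 0]) ->
  exists (X0 : {fset 'rV[R]_d}) (l : nat) (P : 'I_l -> {fset 'rV[R]_d}),
    [/\ (k <= l)%N,
        X0 `<=` X,
        (forall i j, i != j -> [disjoint P i & P j]),
        (forall x, (x \in X `\` X0) <-> (exists i, x \in P i))
      & [/\ #|` X0| = \dim (fspan X0),
             (forall i, #|` P i| = (\dim (fspan (P i))).+1),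
             (forall i, span_orth X0 (P i))
           & (forall i j, i != j -> span_orth (P i) (P j))]].
Proof.
move=> _ _ _ _ HX Hneg _.
have [X0 [s [HX0 Hdis Hcov Hd0 [Hcard Horth0 Horth Hsz]]]] :=
  @decomp R d _ X (leqnn _) Hneg.
exists X0, (size s), (fun i => nth fset0 s i); split => //.
- have Hdim : (\dim (fspan X) <= d)%N.
    have := dimvS (subvf (fspan X)); by rewrite dimvf dim_matrix mul1r.
  move: Hsz; rewrite HX => Hsz.
  by rewrite -(leq_add2l d) Hsz leq_add2r.
- by move=> i j Hij; apply: Hdis.
- move=> x; split.
    by move/Hcov => [i Hi Hx]; exists (Ordinal Hi).
  by move=> [i Hi]; apply/Hcov; exists i.
split => //.
- by move=> i; apply: Hcard.
- by move=> i; apply: Horth0.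
- by move=> i j Hij; apply: Horth.
Qed.
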